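(* Let $S$ be an inverse monoid and $\mathcal M$ a finite quasi-generating set for $S$. Then the action of $S$ on the presheaf of geodesic metric spaces $(S,d_{\mathcal M})$ over $E(S)$ (with projection $s\mapsto s^{-1}s$ and action given by right multiplication) is proper and cobounded.
   Context: An inverse monoid is a monoid $S$ (identity $1$) in which every $s$ has a unique $s^{-1}$ with $ss^{-1}s=s$, $s^{-1}ss^{-1}=s^{-1}$. $E(S)$ is its set of idempotents. Green's relation $\mathcal L$: $(s,t)\in\mathcal L$ iff $s^{-1}s=t^{-1}t$. A quasi-generating set is a subset $\mathcal M=\mathcal M^{-1}\subseteq S$ such that $S$ is generated as a semigroup by $\mathcal M\cup E(S)$. The Cayley metric: $d_{\mathcal M}(s,t)=\infty$ if $(s,t)\notin\mathcal L$, and otherwise the path distance from $s$ to $t$ in the graph on the $\mathcal L$-class of $s$ with $u,v$ joined by an edge of length 1 whenever $gu=v$ for some $g\in\mathcal M$. This makes $S$ a presheaf of metric spaces over $E(S)$: projection $p(s)=s^{-1}s$, fiber over $e$ the $\mathcal L$-class $\{s: s^{-1}s=e\}$, and $S$ acts on it by right multiplication. For an inverse monoid $S$ acting (on the right) on a presheaf of metric spaces $X$ over $E(S)$ with fibers $X_e$ and extended metric $d$ (infinite between different fibers): the action is proper if for every $y_1\in X_1$ and $R\ge0$ there is a finite $\mathcal C\subseteq S$ with $\{s\in S: d(y_1\cdot s, y_1\cdot s^{-1}s)\le R\}\subseteq\{ce: c\in\mathcal C, e\in E(S)\}$; it is cobounded if there exist $x_1\in X_1$ and $T\ge0$ such that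 every point of $X$ is of the form $y\cdot s$ with $s\in S$ and $d(x_1,y)\le T$. *)

(* Defs.v *)
From Stdlib Require Import Reals List.
From Coquelicot Require Import Coquelicot.
Open Scope R_scope.

Record inverse_monoid := InverseMonoid {
  im_carrier :> Type;
  im_mul : im_carrier -> im_carrier -> im_carrier;
  im_one : im_carrier;
  im_inv : im_carrier -> im_carrier;
  im_mulA : forall a b c, im_mul a (im_mul b c) = im_mul (im_mul a b) c;
  im_mul1s : forall a, im_mul im_one a = a;
  im_muls1 : forall a, im_mul a im_one = a;
  im_inv1 : forall s, im_mul (im_mul s (im_inv s)) s = s;
  im_inv2 : forall s, im_mul (im_mul (im_inv s) s) (im_inv s) = im_inv s;
  im_inv_uniq : forall s t, im_mul (im_mul s t) s = s ->
                  im_mul (im_mul t s) t = t -> t = im_inv s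
}.

Arguments im_mul {_}.
Arguments im_one {_}.
Arguments im_inv {_}.

Section InverseMonoidDefs.
Variable IM : inverse_monoid.

Definition idempotent (e : IM) : Prop := im_mul e e = e.

Definition greenL (s t : IM) : Prop :=
  im_mul (im_inv s) s = im_mul (im_inv t) t.

Inductive sgen (P : IM -> Prop) : IM -> Prop :=
| sgen_base : forall x, P x -> sgen P x
| sgen_mul : forall x y, sgen P x -> sgen P y -> sgen P (im_mul x y).

Definition quasi_generating (M : list IM) : Prop :=
  (forall g, In g M -> In (im_inv g) M) /\
  (forall s, sgen (fun x => In x M \/ idempotent x) s).

Definition cayley_edge (M : list IM) (u v : IM) : Prop :=
  exists g, In g M /\ (im_mul g u = v \/ im_mul g v = u).

Inductive cayley_path (M : list IM) (c : IM) : IM -> IM -> nat -> Prop :=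
| cpath_nil : forall u, greenL c u -> cayley_path M c u u 0
| cpath_cons : forall u v w n, greenL c u -> cayley_edge M u v ->
    cayley_path M c v w n -> cayley_path M c u w (Datatypes.S n).

(** The Cayley metric d_M: infinite if (s,t) not in L, otherwise the
    path distance in the graph on the L-class of s. *)
Definition cayley_dist (M : list IM) (s t : IM) : Rbar :=
  Glb_Rbar (fun r => greenL s t /\
     exists n : nat, r = INR n /\ cayley_path M s s t n).

End InverseMonoidDefs.

Arguments idempotent {_}.
Arguments greenL {_}.
Arguments quasi_generating {_}.
Arguments cayley_dist {_}.

(** Right action of S on a presheaf of metric spaces X over E(S), given by
    projection p : X -> S (with values in E(S)), action act and extended
    metric d (infinite between different fibers). *)
Definition action_proper (S : inverse_monoid) (X : Type) (p : X -> S)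
    (act : X -> S -> X) (d : X -> X -> Rbar) : Prop :=
  forall (y1 : X), p y1 = im_one -> forall R : R, 0 <= R ->
  exists C : list S, forall s : S,
    Rbar_le (d (act y1 s) (act y1 (im_mul (im_inv s) s))) (Finite R) ->
    exists c e, In c C /\ idempotent e /\ s = im_mul c e.

Definition action_cobounded (S : inverse_monoid) (X : Type) (p : X -> S)
    (act : X -> S -> X) (d : X -> X -> Rbar) : Prop :=
  exists x1 : X, p x1 = im_one /\
  exists T : R, 0 <= T /\
  forall x : X, exists (y : X) (s : S), x = act y s /\ Rbar_le (d x1 y) (Finite T).

Definition self_proj (S : inverse_monoid) (s : S) : S := im_mul (im_inv s) s.
Definition self_act (S : inverse_monoid) (s t : S) : S := im_mul s t.

(* Main.v *)
Require Import Defs.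
From Stdlib Require Import Reals List.
From Coquelicot Require Import Coquelicot.
From Stdlib Require Import Classical Lia Lra ZArith.

Section Th.
Variable S : inverse_monoid.
Local Notation "a * b" := (@im_mul S a b).
Local Notation "a '" := (@im_inv S a) (at level 2, format "a '").
Local Notation one := (@im_one S).

Lemma invK (s : S) : (s ') ' = s.
Proof. symmetry. apply im_inv_uniq; [apply im_inv2 | apply im_inv1]. Qed.

Lemma idem_inv (x : S) : x * x = x -> x ' = x.
Proof. intro H. symmetry. apply im_inv_uniq; rewrite H; exact H. Qed.

Lemma idem_r (e : S) : e * e = e -> forall X, X * e * e = X * e.
Proof. intros He X. rewrite <- im_mulA, He. reflexivity. Qed.

Lemma idem_mul (e f : S) : e * e = e -> f * f = f -> (e * f) * (e * f) = e * f.
Proof.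
  intros He Hf. set (x := (e * f) ').
  assert (I1 : e * f * x * (e * f) = e * f) by (unfold x; apply im_inv1).
  assert (I2 : x * (e * f) * x = x) by (unfold x; apply im_inv2).
  rewrite !im_mulA in I1, I2.
  assert (Hx : f * x * e = x).
  { unfold x. apply im_inv_uniq; fold x; rewrite !im_mulA.
    - rewrite (idem_r f Hf), (idem_r e He). exact I1.
    - rewrite (idem_r e He), (idem_r f Hf).
      replace (f * x * e * f * x * e) with (f * (x * e * f * x) * e)
        by (rewrite !im_mulA; reflexivity).
      rewrite I2. reflexivity. }
  assert (Hxx : x * x = x).
  { transitivity ((f * x * e) * (f * x * e)); [rewrite Hx; reflexivity|].
    replace (f * x * e * (f * x * e)) with (f * (x * e * f * x) * e)
      by (rewrite !im_mulA; reflexivity).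
    rewrite I2. exact Hx. }
  assert (ef_x : e * f = x).
  { rewrite <- (invK (e * f)). fold x. apply idem_inv. exact Hxx. }
  rewrite ef_x. exact Hxx.
Qed.

Lemma idem_comm (e f : S) : e * e = e -> f * f = f -> e * f = f * e.
Proof.
  intros He Hf.
  pose proof (idem_mul e f He Hf) as Hef.
  rewrite <- (idem_inv _ Hef). symmetry. apply im_inv_uniq.
  - replace (e * f * (f * e) * (e * f)) with (e * (f * f) * (e * e) * f)
      by (rewrite !im_mulA; reflexivity).
    rewrite He, Hf. rewrite <- im_mulA. exact Hef.
  - replace (f * e * (e * f) * (f * e)) with (f * (e * e) * (f * f) * e)
      by (rewrite !im_mulA; reflexivity).
    rewrite He, Hf. rewrite <- im_mulA. exact (idem_mul f e Hf He).
Qed.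

Lemma idem_ls (s : S) : (s ' * s) * (s ' * s) = s ' * s.
Proof. rewrite im_mulA. rewrite im_inv2. reflexivity. Qed.

Lemma idem_rs (s : S) : (s * s ') * (s * s ') = s * s '.
Proof. rewrite im_mulA. rewrite im_inv1. reflexivity. Qed.

Lemma inv_mul (a b : S) : (a * b) ' = b ' * a '.
Proof.
  symmetry. apply im_inv_uniq.
  - replace (a * b * (b ' * a ') * (a * b)) with (a * ((b * b ') * (a ' * a)) * b)
      by (rewrite !im_mulA; reflexivity).
    rewrite (idem_comm (b * b ') (a ' * a)) by (apply idem_rs || apply idem_ls).
    replace (a * (a ' * a * (b * b ')) * b) with ((a * a ' * a) * (b * b ' * b))
      by (rewrite !im_mulA; reflexivity).
    rewrite !im_inv1. reflexivity.
  - replace (b ' * a ' * (a * b) * (b ' * a ')) with (b ' * ((a ' * a) * (b * b ')) * a ')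
      by (rewrite !im_mulA; reflexivity).
    rewrite (idem_comm (a ' * a) (b * b ')) by (apply idem_rs || apply idem_ls).
    replace (b ' * (b * b ' * (a ' * a)) * a ') with ((b ' * b * b ') * (a ' * a * a '))
      by (rewrite !im_mulA; reflexivity).
    rewrite !im_inv2. reflexivity.
Qed.

Lemma edge_back (g u v : S) : greenL u v -> g * u = v -> g ' * v = u.
Proof.
  unfold greenL. intros HL Hv.
  symmetry. transitivity (u * (u ' * u)).
  { rewrite im_mulA, im_inv1. reflexivity. }
  rewrite HL, <- Hv, inv_mul.
  replace (u * (u ' * g ' * (g * u))) with ((u * u ') * (g ' * g) * u)
    by (rewrite !im_mulA; reflexivity).
  rewrite (idem_comm (u * u ') (g ' * g)) by (apply idem_rs || apply idem_ls).
  replace (g ' * g * (u * u ') * u) with (g ' * (g * (u * u ' * u)))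
    by (rewrite !im_mulA; reflexivity).
  rewrite im_inv1. reflexivity.
Qed.

Fixpoint words (M : list S) (n : nat) : list S :=
  match n with
  | O => one :: nil
  | Datatypes.S n => words M n ++ flat_map (fun h => map (fun k => h * k) (words M n)) M
  end.

Lemma words_mono M n m : (n <= m)%nat -> forall k, In k (words M n) -> In k (words M m).
Proof.
  induction 1; auto. intros k Hk. simpl. apply in_or_app. left. auto.
Qed.

Lemma words_S M n h k : In h M -> In k (words M n) -> In (h * k) (words M (Datatypes.S n)).
Proof.
  intros Hh Hk. simpl. apply in_or_app. right. apply in_flat_map.
  exists h. split; auto. apply in_map. auto.
Qed.

Lemma path_head M c u w n : cayley_path S M c u w n -> greenL c u.
Proof. destruct 1; auto. Qed.

Lemma path_words M c u w n : (forall g, In g M -> In (g ') M) ->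
  cayley_path S M c u w n -> exists k, In k (words M n) /\ u = k * w.
Proof.
  intros HM. induction 1 as [u Hu | u v w n Hu He Hp IH].
  - exists one. split; [left; reflexivity | symmetry; apply im_mul1s].
  - destruct IH as [k [Hk Hv]].
    destruct He as [g [Hg [Hgu | Hgv]]].
    + exists (g ' * k). split.
      * apply words_S; auto.
      * assert (HL : greenL u v).
        { pose proof (path_head _ _ _ _ _ Hp). unfold greenL in *. congruence. }
        rewrite <- (edge_back g u v HL Hgu). rewrite Hv, im_mulA. reflexivity.
    + exists (g * k). split; [apply words_S; auto|].
      rewrite <- Hgv, Hv, im_mulA. reflexivity.
Qed.

Lemma glb_small (E : R -> Prop) (r : R) : Rbar_le (Glb_Rbar E) (Finite r) ->
  exists x, E x /\ x < r + 1.
Proof.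
  intros H. destruct (classic (exists x, E x /\ x < r + 1)) as [|Hn]; auto.
  exfalso. destruct (Glb_Rbar_correct E) as [_ Hg].
  assert (Hlb : is_lb_Rbar E (Finite (r + 1))).
  { intros x Ex. simpl. destruct (Rle_dec (r+1) x); auto.
    exfalso. apply Hn. exists x. split; auto. lra. }
  pose proof (Rbar_le_trans _ _ _ (Hg _ Hlb) H). simpl in H0. lra.
Qed.

End Th.

Theorem lemma2p3 (S : inverse_monoid) (M : list S) :
  quasi_generating M ->
  action_proper S S (self_proj S) (self_act S) (cayley_dist M) /\
  action_cobounded S S (self_proj S) (self_act S) (cayley_dist M).
Proof.
  intros [HM _]. split.
  - intros y1 Hy1 R HR.
    destruct (archimed R) as [Hup _].
    set (N := Z.to_nat (up R)).
    assert (HN : R < INR N).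
    { unfold N. rewrite INR_IZR_INZ, Z2Nat.id; auto.
      apply le_IZR. lra. }
    exists (map (fun k => im_mul (im_mul (im_inv y1) k) y1) (words S M N)).
    intros s Hd.
    destruct (glb_small _ _ Hd) as [x [[HL [n [Hx Hp]]] Hlt]].
    destruct (path_words S M _ _ _ _ HM Hp) as [k [Hk Hu]].
    assert (HnN : (n <= N)%nat).
    { subst x. assert (INR n < INR N + 1) by lra.
      rewrite <- S_INR in H. apply INR_lt in H. lia. }
    exists (im_mul (im_mul (im_inv y1) k) y1), (im_mul (im_inv s) s).
    split; [|split].
    + apply in_map_iff. exists k. split; [reflexivity|]. eapply words_mono; eauto.
    + apply idem_ls.
    + unfold self_act in Hu. unfold self_proj in Hy1.
      rewrite <- !im_mulA. rewrite <- Hu.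
      rewrite im_mulA, Hy1, im_mul1s. reflexivity.
  - assert (H1 : im_inv (@im_one S) = im_one) by (apply idem_inv; apply im_mul1s).
    exists im_one. split.
    { unfold self_proj. rewrite H1. apply im_mul1s. }
    exists 0. split; [lra|].
    intros x. exists im_one, x. split.
    { unfold self_act. symmetry. apply im_mul1s. }
    destruct (Glb_Rbar_correct (fun r => greenL (@im_one S) im_one /\
       exists n : nat, r = INR n /\ cayley_path S M im_one im_one im_one n)) as [Hlb _].
    apply Hlb. split; [reflexivity|]. exists 0%nat. split; [reflexivity|].
    constructor. reflexivity.
Qed.
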